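(* Let $k$ be a field and $\mathsf{E}$ a locally finite $k$-linear category. Then every $\mathsf{E}$-module (left or right) is the direct limit (directed union) of its locally finite $\mathsf{E}$-submodules.
   Context: A small $k$-linear category $\mathsf{E}$ has $k$-vector spaces $\operatorname{Hom}_\mathsf{E}(x,y)$, $k$-bilinear associative composition and identities with $\mathrm{id}_x\ne0$. A left (resp. right) $\mathsf{E}$-module is a $k$-linear functor $\mathsf{E}\to k\text{-Vect}$ (resp. $\mathsf{E}^{op}\to k\text{-Vect}$); it is locally finite if all its values are finite-dimensional. Write $x\preceq y$ if there are $n\ge1$ and objects $x=z_0,\dots,z_n=y$ with $\operatorname{Hom}_\mathsf{E}(z_{i-1},z_i)\neq0$ for all $i$. $\mathsf{E}$ is locally finite if all Hom spaces are finite-dimensional and every $\{z:x\preceq z\preceq y\}$ is finite. *)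

(* Defs.v *)
From HB Require Import structures.
From mathcomp Require Import all_boot all_order all_algebra.
From Stdlib Require Import Relations.
From Stdlib Require List.
Set Implicit Arguments. Unset Strict Implicit. Unset Printing Implicit Defensive.
Import GRing.Theory.
Local Open Scope ring_scope.

Definition in_span (k : fieldType) (V : lmodType k) (s : seq V) (v : V) : Prop :=
  exists c : 'I_(size s) -> k, v = \sum_(i < size s) c i *: s`_i.

(* the subset P of V (assumed a subspace) is finite-dimensional:
   it is spanned by finitely many of its elements *)
Definition fin_dim_sub (k : fieldType) (V : lmodType k) (P : V -> Prop) : Prop :=
  exists s : seq V, (forall v, v \in s -> P v) /\ (forall v, P v -> in_span s v).

Definition fin_dim (k : fieldType) (V : lmodType k) : Prop :=
  fin_dim_sub (fun _ : V => True).

Record kcat (k : fieldType) := KCat {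
  Obj : Type;
  Hom : Obj -> Obj -> lmodType k;
  comp : forall x y z, Hom y z -> Hom x y -> Hom x z;   (* comp g f = g o f *)
  idm : forall x, Hom x x;
  comp_linl : forall x y z (a : k) (g1 g2 : Hom y z) (f : Hom x y),
      comp (a *: g1 + g2) f = a *: comp g1 f + comp g2 f;
  comp_linr : forall x y z (a : k) (g : Hom y z) (f1 f2 : Hom x y),
      comp g (a *: f1 + f2) = a *: comp g f1 + comp g f2;
  comp_assoc : forall w x y z (h : Hom y z) (g : Hom x y) (f : Hom w x),
      comp h (comp g f) = comp (comp h g) f;
  comp_idl : forall x y (f : Hom x y), comp (idm y) f = f;
  comp_idr : forall x y (f : Hom x y), comp f (idm x) = f;
  idm_neq0 : forall x, idm x != 0
}.

Arguments Obj {k} _.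
Arguments Hom {k} _ _ _.
Arguments comp {k _ _ _ _}.
Arguments idm {k _}.

Section Cat.
Variables (k : fieldType) (E : kcat k).

Definition hom_nz (x y : Obj E) : Prop := exists f : Hom E x y, f != 0.

(* x <= y : chain x = z_0, ..., z_n = y with n >= 1 and nonzero Homs *)
Definition preceq : relation (Obj E) := clos_trans (Obj E) hom_nz.

Definition locally_finite_cat : Prop :=
  (forall x y, fin_dim (Hom E x y)) /\
  (forall x y, exists l : List.list (Obj E),
      forall z, preceq x z -> preceq z y -> List.In z l).

Record lmodule := LModule {
  lM : Obj E -> lmodType k;
  lact : forall x y, Hom E x y -> lM x -> lM y;
  lact_linl : forall x y (a : k) (f1 f2 : Hom E x y) (m : lM x),
      lact (a *: f1 + f2) m = a *: lact f1 m + lact f2 m;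
  lact_linr : forall x y (a : k) (f : Hom E x y) (m1 m2 : lM x),
      lact f (a *: m1 + m2) = a *: lact f m1 + lact f m2;
  lact_comp : forall x y z (g : Hom E y z) (f : Hom E x y) (m : lM x),
      lact (comp g f) m = lact g (lact f m);
  lact_id : forall x (m : lM x), lact (idm x) m = m
}.

Record rmodule := RModule {
  rM : Obj E -> lmodType k;
  ract : forall x y, Hom E x y -> rM y -> rM x;
  ract_linl : forall x y (a : k) (f1 f2 : Hom E x y) (m : rM y),
      ract (a *: f1 + f2) m = a *: ract f1 m + ract f2 m;
  ract_linr : forall x y (a : k) (f : Hom E x y) (m1 m2 : rM y),
      ract f (a *: m1 + m2) = a *: ract f m1 + ract f m2;
  ract_comp : forall x y z (g : Hom E y z) (f : Hom E x y) (m : rM z),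
      ract (comp g f) m = ract f (ract g m);
  ract_id : forall x (m : rM x), ract (idm x) m = m
}.

Definition subspace_fam (V : Obj E -> lmodType k) (N : forall x, V x -> Prop) :=
  forall x, N x 0 /\ (forall u v, N x u -> N x v -> N x (u + v)) /\
            (forall (a : k) v, N x v -> N x (a *: v)).

Definition is_lsubmodule (M : lmodule) (N : forall x, lM M x -> Prop) : Prop :=
  subspace_fam N /\
  forall x y (f : Hom E x y) m, N x m -> N y (lact f m).

Definition is_rsubmodule (M : rmodule) (N : forall x, rM M x -> Prop) : Prop :=
  subspace_fam N /\
  forall x y (f : Hom E x y) m, N y m -> N x (ract f m).

Definition lf_lsub (M : lmodule) (N : forall x, lM M x -> Prop) : Prop :=
  is_lsubmodule N /\ forall x, fin_dim_sub (N x).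

Definition lf_rsub (M : rmodule) (N : forall x, rM M x -> Prop) : Prop :=
  is_rsubmodule N /\ forall x, fin_dim_sub (N x).

End Cat.

Arguments lf_lsub {k E} M N.
Arguments lf_rsub {k E} M N.
Arguments lM {k E} _ _.
Arguments rM {k E} _ _.

(* Main.v *)
Require Import Defs.
From mathcomp Require Import all_boot all_order all_algebra.
Set Implicit Arguments. Unset Strict Implicit. Unset Printing Implicit Defensive.
Import GRing.Theory.

Section H.
Local Open Scope ring_scope.
Variable k : fieldType.

Definition in_span' (V : lmodType k) (s : seq V) (v : V) : Prop :=
  exists c : nat -> k, v = \sum_(i < size s) c i *: s`_i.

Lemma in_spanE (V : lmodType k) (s : seq V) v : in_span s v <-> in_span' s v.
Proof.
split.
- case=> c ->; exists (fun j => oapp c 0 (insub j)).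
  by apply: eq_bigr => i _; rewrite valK.
- case=> c ->; by exists (fun i => c i).
Qed.

Lemma lin0 (U V : lmodType k) (F : U -> V)
  (Flin : forall a u v, F (a *: u + v) = a *: F u + F v) : F 0 = 0.
Proof.
have h := Flin 1 0 0.
rewrite !scale1r addr0 in h.
by apply: (addrI (F 0)); rewrite addr0 -h.
Qed.

Lemma linD (U V : lmodType k) (F : U -> V)
  (Flin : forall a u v, F (a *: u + v) = a *: F u + F v) u v : F (u + v) = F u + F v.
Proof. by have := Flin 1 u v; rewrite !scale1r. Qed.

Lemma linZ (U V : lmodType k) (F : U -> V)
  (Flin : forall a u v, F (a *: u + v) = a *: F u + F v) a u : F (a *: u) = a *: F u.
Proof. by have := Flin a u 0; rewrite !addr0 (lin0 Flin) addr0. Qed.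

Lemma lin_sum (U V : lmodType k) (F : U -> V)
  (Flin : forall a u v, F (a *: u + v) = a *: F u + F v) n (c : 'I_n -> k) g :
  F (\sum_(i < n) c i *: g i) = \sum_(i < n) c i *: F (g i).
Proof.
elim: n c g => [|n IH] c g; first by rewrite !big_ord0 (lin0 Flin).
by rewrite !big_ord_recr /= (linD Flin) (linZ Flin) IH.
Qed.

Lemma image_fd (U V : lmodType k) (F : U -> V)
  (Flin : forall a u v, F (a *: u + v) = a *: F u + F v) :
  fin_dim U -> fin_dim_sub (fun v => exists u, v = F u).
Proof.
case=> s [_ hs]; exists (map F s); split.
  by move=> v /mapP [u _ ->]; exists u.
move=> _ [u ->]; have /in_spanE [c ->] := hs u I.
apply/in_spanE; exists c; rewrite (lin_sum Flin).
rewrite -(big_mkord xpredT (fun i => c i *: (map F s)`_i)) size_map big_mkord.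
by apply: eq_bigr => i _; rewrite (nth_map 0).
Qed.

Lemma sum_fd (V : lmodType k) (P Q : V -> Prop) :
  P 0 -> Q 0 -> fin_dim_sub P -> fin_dim_sub Q ->
  fin_dim_sub (fun v => exists u w, P u /\ Q w /\ v = u + w).
Proof.
move=> P0 Q0 [s1 [h1 g1]] [s2 [h2 g2]]; exists (s1 ++ s2); split.
  move=> v; rewrite mem_cat => /orP [/h1 pv | /h2 qv].
    by exists v, 0; rewrite addr0.
  by exists 0, v; rewrite add0r.
move=> _ [u [w [/g1/in_spanE [c1 ->] [/g2/in_spanE [c2 ->] ->]]]].
apply/in_spanE.
exists (fun j => if j < size s1 then c1 j else c2 (j - size s1))%N.
rewrite size_cat big_split_ord /=; congr (_ + _); apply: eq_bigr => i _.
  by rewrite nth_cat ltn_ord.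
by rewrite nth_cat ltnNge leq_addr /= addKn.
Qed.
End H.

Section G.
Local Open Scope ring_scope.
Variables (k : fieldType) (O : Type) (H : O -> O -> lmodType k) (V : O -> lmodType k)
  (act : forall x y, H x y -> V x -> V y) (idh : forall x, H x x)
  (cmp : forall x y z, H y z -> H x y -> H x z).
Hypotheses
  (linl : forall x y (a : k) (f1 f2 : H x y) (m : V x),
      act (a *: f1 + f2) m = a *: act f1 m + act f2 m)
  (linr : forall x y (a : k) (f : H x y) (m1 m2 : V x),
      act f (a *: m1 + m2) = a *: act f m1 + act f m2)
  (actc : forall x y z (g : H y z) (f : H x y) (m : V x),
      act (cmp g f) m = act g (act f m))
  (acti : forall x (m : V x), act (idh x) m = m)
  (hfd : forall x y, fin_dim (H x y)).

Definition gsub (N : forall x, V x -> Prop) :=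
  ((forall x, N x 0 /\ (forall u v, N x u -> N x v -> N x (u + v)) /\
            (forall (a : k) v, N x v -> N x (a *: v))) /\
   (forall x y (f : H x y) m, N x m -> N y (act f m))) /\
  (forall x, fin_dim_sub (N x)).

Lemma generic :
  (forall N1 N2, gsub N1 -> gsub N2 ->
        exists N3, gsub N3 /\
          (forall x m, N1 x m -> N3 x m) /\ (forall x m, N2 x m -> N3 x m)) /\
  (forall x (m : V x), exists N, gsub N /\ N x m).
Proof.
split.
- move=> N1 N2 [[s1 c1] f1] [[s2 c2] f2].
  exists (fun x v => exists u w, N1 x u /\ N2 x w /\ v = u + w).
  split; last split.
  + split; last first.
      move=> x; apply: sum_fd; [exact: (s1 x).1 | exact: (s2 x).1 | exact: f1 | exact: f2].
    split.
      move=> x; have [a1 [b1 d1]] := s1 x; have [a2 [b2 d2]] := s2 x.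
      split; first by exists 0, 0; rewrite addr0.
      split.
        move=> _ _ [u1 [w1 [h1 [h1' ->]]]] [u2 [w2 [h2 [h2' ->]]]].
        exists (u1 + u2), (w1 + w2); split; first exact: b1.
        by split; [exact: b2 | rewrite addrACA].
      move=> a _ [u [w [h [h' ->]]]]; exists (a *: u), (a *: w).
      by split; [exact: d1 | split; [exact: d2 | rewrite scalerDr]].
    move=> x y f _ [u [w [h [h' ->]]]]; exists (act f u), (act f w).
    split; first exact: c1. split; first exact: c2.
    by apply: linD => a u' v'; apply: linr.
  + move=> x m h; exists m, 0; split => //; split; last by rewrite addr0.
    exact: (s2 x).1.
  + move=> x m h; exists 0, m; split; first exact: (s1 x).1.
    by split; last rewrite add0r.
- move=> x m; exists (fun y v => exists f : H x y, v = act f m); split; last first.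
    by exists (idh x); rewrite acti.
  have Fl : forall y a (u v : H x y), act (a *: u + v) m = a *: act u m + act v m.
    by move=> y a u v; apply: linl.
  split; last by move=> y; apply: image_fd (Fl y) (hfd x y).
  split.
    move=> y; split; first by exists 0; rewrite (lin0 (Fl y)).
    split.
      by move=> _ _ [f ->] [g ->]; exists (f + g); rewrite (linD (Fl y)).
    by move=> a _ [f ->]; exists (a *: f); rewrite (linZ (Fl y)).
  by move=> y z g _ [f ->]; exists (cmp g f); rewrite actc.
Qed.
End G.

Theorem lemma6p6 (k : fieldType) (E : kcat k) :
  locally_finite_cat E ->
  (forall M : lmodule E,
     (forall N1 N2, lf_lsub M N1 -> lf_lsub M N2 ->
        exists N3, lf_lsub M N3 /\
          (forall x m, N1 x m -> N3 x m) /\ (forall x m, N2 x m -> N3 x m)) /\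
     (forall x (m : lM M x), exists N, lf_lsub M N /\ N x m)) /\
  (forall M : rmodule E,
     (forall N1 N2, lf_rsub M N1 -> lf_rsub M N2 ->
        exists N3, lf_rsub M N3 /\
          (forall x m, N1 x m -> N3 x m) /\ (forall x m, N2 x m -> N3 x m)) /\
     (forall x (m : rM M x), exists N, lf_rsub M N /\ N x m)).
Proof.
move=> [hfd _]; split => M.
- exact: (@generic k (Obj E) (Defs.Hom E) (lM M) (@lact _ _ M) (@Defs.idm _ E) (@Defs.comp _ E)
     (@lact_linl _ _ M) (@lact_linr _ _ M) (@lact_comp _ _ M) (@lact_id _ _ M) hfd).
- have := (@generic k (Obj E) (fun x y => Defs.Hom E y x) (rM M) (fun x y f => @ract _ _ M y x f)
     (@Defs.idm _ E) (fun x y z g f => @Defs.comp _ E z y x f g)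
     (fun x y => @ract_linl _ _ M y x) (fun x y => @ract_linr _ _ M y x)
     (fun x y z g f => @ract_comp _ _ M z y x f g) (@ract_id _ _ M) (fun x y => hfd y x)).
  set G := gsub _.
  have T1 : forall N, G N -> lf_rsub M N.
    by move=> N [[a b] c]; split; [split; [exact: a | move=> x y f m; exact: b] | exact: c].
  have T2 : forall N, lf_rsub M N -> G N.
    by move=> N [[a b] c]; split; [split; [exact: a | move=> x y f m; exact: b] | exact: c].
  move=> [hd hc]; split.
    move=> N1 N2 /T2 h1 /T2 h2; have [N3 [/T1 h3 h4]] := hd _ _ h1 h2.
    by exists N3.
  by move=> x m; have [N [/T1 h3 h4]] := hc x m; exists N.
Qed.
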